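(* Consider a pairwise spanner instance on a directed graph $G=(V,E)$ with uniform edge lengths and $k\ge 1$ terminal pairs, with optimal value $\mathsf{OPT}$. Then there exists a junction tree $J$ in $G$ with $D(J)\neq\emptyset$ and density $\rho(J)\le \mathsf{OPT}/\sqrt{k}$.
   Context: Pairwise spanner problem: given a directed graph $G=(V,E)$ with $\ell(e)=1$ for all $e$, terminal pairs $(s_i,t_i)$, $i\in[k]$, and target distances $d_i$ with $d_G(s_i,t_i)\le d_i$, find $F\subseteq E$ of minimum cardinality such that $(V,F)$ contains an $s_i\leadsto t_i$ path with at most $d_i$ edges for every $i$; $\mathsf{OPT}$ is this minimum. A junction tree rooted at $r\in V$ is a subgraph $J$ of $G$ that is the union of an in-arborescence $A^{in}$ rooted at $r$ (every vertex of it has a unique path to $r$ in it) and an out-arborescence $A^{out}$ rooted at $r$. A terminal pair $(s_i,t_i)$ is connected by $J$ if $s_i\in A^{in}$, $t_i\in A^{out}$, and the $s_i\leadsto r$ path in $A^{in}$ plus the $r\leadsto t_i$ path in $A^{out}$ have at most $d_i$ edges in total. $D(J)$ is the set of terminal pairs connected by $J$, and the density of $J$ is $\rho(J)=|E(J)|/|D(J)|$. *)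

(* Defs.v *)
From HB Require Import structures.
From mathcomp Require Import all_boot all_order all_algebra.
Set Implicit Arguments. Unset Strict Implicit. Unset Printing Implicit Defensive.
Import Order.TTheory GRing.Theory Num.Theory.

Section Spanner.
Variable V : finType.

(* A directed graph on vertex set V is given by its edge set E : {set V * V};
   an edge (u, v) goes from u to v; all edge lengths are 1. *)

Fixpoint reach (F : {set V * V}) (n : nat) (u v : V) : bool :=
  match n with
  | 0 => u == v
  | n'.+1 => (u == v) || [exists w, ((u, w) \in F) && reach F n' w v]
  end.

Definition erel (F : {set V * V}) : rel V := fun x y => (x, y) \in F.

Definition verts (A : {set V * V}) (r : V) : {set V} :=
  [set x | (x == r) || [exists y, ((x, y) \in A) || ((y, x) \in A)]].

Definition in_arb (A : {set V * V}) (r : V) : bool :=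
  [forall u in verts A r,
    if u == r then [forall w, (r, w) \notin A]
    else (#|[set w | (u, w) \in A]| == 1) && connect (erel A) u r].

Definition out_arb (A : {set V * V}) (r : V) : bool :=
  [forall u in verts A r,
    if u == r then [forall w, (w, r) \notin A]
    else (#|[set w | (w, u) \in A]| == 1) && connect (erel A) r u].

Record junction := Junction { jroot : V; jin : {set V * V}; jout : {set V * V} }.

Definition junction_in (E : {set V * V}) (J : junction) : bool :=
  [&& jin J \subset E, jout J \subset E,
      in_arb (jin J) (jroot J) & out_arb (jout J) (jroot J)].

Definition jedges (J : junction) : {set V * V} := jin J :|: jout J.

Section Pairs.
Variables (k : nat) (s t : 'I_k -> V) (d : 'I_k -> nat).

(* (s_i, t_i) is connected by J: s_i in A_in, t_i in A_out, and the
   s_i ~> r path in A_in plus the r ~> t_i path in A_out have at most d_i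
   edges in total (paths in arborescences are unique). *)
Definition jconnects (J : junction) (i : 'I_k) : bool :=
  [&& s i \in verts (jin J) (jroot J), t i \in verts (jout J) (jroot J) &
      [exists a : 'I_(d i).+1,
         reach (jin J) a (s i) (jroot J) && reach (jout J) (d i - a) (jroot J) (t i)]].

Definition jD (J : junction) : {set 'I_k} := [set i | jconnects J i].

Definition feasible (F : {set V * V}) : bool :=
  [forall i, reach F (d i) (s i) (t i)].

(* OPT: minimum cardinality of a feasible F subset of E
   (E itself is feasible under the standing assumption, so #|E| is a valid
   default for the min). *)
Definition OPT (E : {set V * V}) : nat :=
  \big[minn/#|E|]_(F : {set V * V} | (F \subset E) && feasible F) #|F|.

End Pairs.
End Spanner.

(* Main.v *)
Require Import Defs.
From HB Require Import structures.
From mathcomp Require Import all_boot all_order all_algebra.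
From mathcomp Require Import lra.
Import Order.TTheory GRing.Theory Num.Theory.
Set Implicit Arguments. Unset Strict Implicit.

Section R.
Variable V : finType.
Implicit Types (F G A H : {set V * V}) (u v w x r : V).

Lemma reach_refl F n u : reach F n u u.
Proof. by case: n => [|n] /=; rewrite eqxx. Qed.

Lemma reach_S F n u v : reach F n u v -> reach F n.+1 u v.
Proof.
elim: n u => [|n IH] u /=; first by move=> ->.
case/orP=> [->//|/existsP[w /andP[uw h]]].
apply/orP; right; apply/existsP; exists w; rewrite uw; exact: IH.
Qed.

Lemma reach_mono F n m u v : n <= m -> reach F n u v -> reach F m u v.
Proof.
move=> /subnK <-; elim: (m - n) => [//|j IH] h.
rewrite addSn; exact/reach_S/IH.
Qed.

Lemma reach_sub F G n u v : F \subset G -> reach F n u v -> reach G n u v.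
Proof.
move=> sFG; elim: n u => [|n IH] u //=.
case/orP=> [->//|/existsP[w /andP[uw h]]].
apply/orP; right; apply/existsP; exists w; rewrite (subsetP sFG _ uw); exact: IH.
Qed.

Lemma reach_cons F n u w v : (u, w) \in F -> reach F n w v -> reach F n.+1 u v.
Proof. move=> uw h /=; apply/orP; right; apply/existsP; exists w; by rewrite uw. Qed.

Lemma reach_snoc F n u w v : reach F n u w -> (w, v) \in F -> reach F n.+1 u v.
Proof.
elim: n u => [|n IH] u /=.
  move/eqP=> -> wv; apply/orP; right; apply/existsP; exists v; by rewrite wv eqxx.
case/orP=> [/eqP-> wv|/existsP[y /andP[uy h]]].
  apply/orP; right; apply/existsP; exists v; by rewrite wv /= eqxx.
move=> wv; apply/orP; right; apply/existsP; exists y; rewrite uy; exact: IH.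
Qed.

Definition revE F : {set V * V} := [set e | (e.2, e.1) \in F].

Lemma in_revE F x y : ((x, y) \in revE F) = ((y, x) \in F).
Proof. by rewrite inE. Qed.

Lemma revEK F : revE (revE F) = F.
Proof. by apply/setP=> [[x y]]; rewrite !in_revE. Qed.

Lemma reach_rev1 F n u v : reach F n u v -> reach (revE F) n v u.
Proof.
elim: n u => [|n IH] u /=; first by rewrite eq_sym.
case/orP=> [/eqP->|/existsP[w /andP[uw h]]]; first by rewrite eqxx.
apply: reach_snoc (IH _ h) _; by rewrite in_revE.
Qed.

Lemma reach_rev F n u v : reach (revE F) n v u = reach F n u v.
Proof.
apply/idP/idP; last exact: reach_rev1.
by move/reach_rev1; rewrite revEK.
Qed.

Lemma reach_connect F n u v : reach F n u v -> connect (erel F) u v.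
Proof.
elim: n u => [|n IH] u /=; first by move/eqP->.
case/orP=> [/eqP->//|/existsP[w /andP[uw h]]].
apply: connect_trans (connect1 _) (IH _ h); exact: uw.
Qed.

Lemma verts_rev A r : verts (revE A) r = verts A r.
Proof.
apply/setP=> x; rewrite !inE; congr (_ || _).
apply/existsP/existsP=> [][y h]; exists y; by rewrite !in_revE orbC in h *.
Qed.

Lemma reach_verts A n x r : reach A n x r -> x \in verts A r.
Proof.
case: n => [|n] /=; first by move=> h; rewrite inE h.
rewrite inE; case/orP=> [->//|/existsP[w /andP[xw _]]].
apply/orP; right; apply/existsP; exists w; by rewrite xw.
Qed.

Lemma reach_verts_out A n x r : reach A n r x -> x \in verts A r.
Proof. by rewrite -reach_rev -verts_rev; apply: reach_verts. Qed.


Lemma in_tree H r N : exists A : {set V * V},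
  [/\ A \subset H, forall w, (r, w) \notin A,
   forall u, u \in verts A r -> u != r -> #|[set w | (u, w) \in A]| = 1,
   forall u, u \in verts A r -> exists n, reach A n u r &
   forall n x, n <= N -> reach H n x r -> reach A n x r].
Proof.
pose P x := fun n => reach H n x r.
pose dl x := find (P x) (iota 0 N.+1).
pose R x := reach H N x r.
have dlP x : R x -> [/\ dl x <= N, reach H (dl x) x r &
   forall n, n <= N -> reach H n x r -> dl x <= n].
  move=> Rx.
  have hs : has (P x) (iota 0 N.+1).
    apply/hasP; exists N; first by rewrite mem_iota leq0n add0n ltnSn.
    exact: Rx.
  have hlt : dl x < N.+1 by rewrite -(size_iota 0 N.+1) -has_find.
  have := nth_find 0 hs; rewrite -/(dl x) nth_iota // add0n => hr.
  split=> // n nN hn; rewrite leqNgt; apply/negP=> lt.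
  have := before_find 0 lt; rewrite nth_iota ?add0n; last by rewrite ltnS.
  by rewrite /P hn.
pose f x := [pick w | ((x, w) \in H) && reach H (dl x).-1 w r].
pose A := [set e | [&& e.1 != r, R e.1 & f e.1 == Some e.2]].
have succ x : x != r -> R x -> exists w, [/\ f x = Some w, (x, w) \in H,
    R w & dl w < dl x].
  move=> xr Rx; have [dN hd hmin] := dlP x Rx.
  move: hd; case E: (dl x) => [|m] /=; first by rewrite (negbTE xr).
  rewrite (negbTE xr) /= => /existsP[w0 /andP[xw0 h0]].
  rewrite /f E /=; case: pickP => [w /andP[xw hw]|/(_ w0)]; last by rewrite xw0 h0.
  have mN : m <= N by apply: leq_trans dN; rewrite E leqnSn.
  have Rw : R w by apply: reach_mono hw.
  exists w; split=> //; have [_ _ hm] := dlP w Rw.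
  by rewrite ltnS; apply: hm.
have inA x w : (x, w) \in A = [&& x != r, R x & f x == Some w].
  by rewrite inE.
have treach x : R x -> reach A (dl x) x r.
  suff: forall m y, dl y <= m -> R y -> reach A (dl y) y r by move/(_ _ x (leqnn _)).
  elim=> [|m IH] y ym Ry.
    have [_ h _] := dlP y Ry; move: ym; rewrite leqn0 => /eqP E0.
    by rewrite E0; rewrite E0 in h.
  case: (eqVneq y r) => [->|yr]; first exact: reach_refl.
  have [w [fy yw Rw lt]] := succ y yr Ry.
  case Ed: (dl y) lt => [//|j] lt.
  apply: (reach_cons (w := w)); first by rewrite inA yr Ry fy eqxx.
  have lw : dl w <= m by rewrite -ltnS (leq_trans lt) // -Ed.
  apply: reach_mono (IH _ lw Rw); by rewrite -ltnS.
have vertsR u : u \in verts A r -> u != r -> R u.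
  rewrite inE => /orP[/eqP->|/existsP[y]]; first by rewrite eqxx.
  case/orP; rewrite inA; first by case/and3P.
  case/and3P=> yr Ry /eqP fy _.
  by have [w [fy' _ Rw _]] := succ y yr Ry; move: fy; rewrite fy' => -[<-].
exists A; split.
- apply/subsetP=> -[x w]; rewrite inA => /and3P[_ _ /eqP].
  rewrite /f; case: pickP => // y /andP[xy _] [<-]; exact: xy.
- by move=> w; rewrite inA eqxx.
- move=> u uv ur; have Ru := vertsR u uv ur.
  have [w [fu _ _ _]] := succ u ur Ru.
  rewrite (_ : [set w0 | (u, w0) \in A] = [set w]) ?cards1 //.
  by apply/setP=> w0; rewrite !inE ur Ru fu /= (inj_eq Some_inj) eq_sym.
- move=> u uv; case: (eqVneq u r) => [->|ur]; first by exists 0; rewrite /= eqxx.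
  by exists (dl u); apply: treach; apply: vertsR.
- move=> n x nN hx.
  have Rx : R x by apply: reach_mono hx.
  have [_ _ hm] := dlP x Rx.
  exact: reach_mono (hm n nN hx) (treach x Rx).
Qed.


Lemma bfs_junction H r N : exists J : junction V, [/\ jroot J = r, junction_in H J,
  forall n x, n <= N -> reach H n x r -> reach (jin J) n x r &
  forall n x, n <= N -> reach H n r x -> reach (jout J) n r x].
Proof.
have [A1 [s1 h1r h1c h1n h1R]] := in_tree H r N.
have [A2 [s2 h2r h2c h2n h2R]] := in_tree (revE H) r N.
exists (Junction r A1 (revE A2)); split=> //=.
- rewrite /junction_in /= s1 /=; apply/and3P; split.
  + apply/subsetP=> -[x y]; rewrite in_revE => /(subsetP s2); by rewrite in_revE.
  + apply/forall_inP=> u uv; case: ifP => [_|/negbT ur].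
      by apply/forallP=> w; apply: h1r.
    rewrite h1c // eqxx /=; have [n hn] := h1n u uv; exact: reach_connect hn.
  + apply/forall_inP=> u; rewrite verts_rev => uv; case: ifP => [_|/negbT ur].
      by apply/forallP=> w; rewrite in_revE; apply: h2r.
    rewrite (_ : [set w | (w, u) \in revE A2] = [set w | (u, w) \in A2]); last first.
      by apply/setP=> w; rewrite !inE.
    rewrite h2c // eqxx /=; have [n hn] := h2n u uv.
    by apply: (reach_connect (n := n)); rewrite reach_rev.
- move=> n x nN hx; rewrite reach_rev; apply: h2R nN _; by rewrite reach_rev.
Qed.

End R.
Section RL. Local Open Scope ring_scope.

Lemma case1 (R : rcfType) (x y o c kk : R) : 0 <= x -> x <= o -> 1 <= c -> c <= y ->
  0 < kk -> kk <= c * c -> x / y <= o / Num.sqrt kk.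
Proof.
move=> x0 xo c1 cy k0 kc.
have q0 : 0 < Num.sqrt kk by rewrite sqrtr_gt0.
have qq : Num.sqrt kk * Num.sqrt kk = kk by rewrite -expr2 sqr_sqrtr // ltW.
set q := Num.sqrt kk in q0 qq *.
have y0 : 0 < y by lra.
have qc : q <= c by nra.
rewrite ler_pdivlMr // mulrAC ler_pdivrMr //; nra.
Qed.

Lemma case2 (R : rcfType) (x y o c kk h f : R) : 0 <= x -> x <= h -> 1 <= y ->
  0 <= c -> c * c < kk -> kk * h <= f * c -> f <= o -> 0 <= h -> 0 <= f ->
  x / y <= o / Num.sqrt kk.
Proof.
move=> x0 xh y1 c0 ck hk fo h0 f0.
have k0 : 0 < kk by nra.
have q0 : 0 < Num.sqrt kk by rewrite sqrtr_gt0.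
have qq : Num.sqrt kk * Num.sqrt kk = kk by rewrite -expr2 sqr_sqrtr // ltW.
set q := Num.sqrt kk in q0 qq *.
have y0 : 0 < y by lra.
have cq : c <= q by nra.
have fc : f * c <= f * q by apply: ler_wpM2l.
have hq1 : (h * q) * q <= f * q by rewrite -mulrA qq; lra.
have hq : h * q <= f.
  by rewrite -(ler_pM2r q0).
rewrite ler_pdivlMr // mulrAC ler_pdivrMr //; nra.
Qed.
End RL.

Section M.
Variable V : finType.

Lemma walk_sets (F : {set V * V}) n u v : reach F n u v ->
  exists HW : {set V * V} * {set V},
  [/\ HW.1 \subset F, reach HW.1 n u v, u \in HW.2,
      forall e, e \in HW.1 -> e.1 \in HW.2 &
      forall x, x \in HW.2 -> exists2 a, a <= n & reach F a u x && reach F (n - a) x v].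
Proof.
elim: n u => [|n IH] u.
  move=> h; exists (set0, [set u]); split=> //=.
  - exact: sub0set.
  - by rewrite inE.
  - by move=> e; rewrite in_set0.
  - by move=> x; rewrite inE => /eqP->; exists 0 => //; rewrite /= eqxx; exact: h.
move=> h; case: (eqVneq u v) => [uv|uv].
  exists (set0, [set u]); split=> //=.
  - exact: sub0set.
  - by rewrite uv /= eqxx.
  - by rewrite inE.
  - by move=> e; rewrite in_set0.
  - by move=> x; rewrite inE => /eqP->; exists 0 => //; rewrite reach_refl h.
move: h => /= /orP[/eqP uv'|/existsP[w /andP[uw h]]]; first by rewrite uv' eqxx in uv.
have [[H1 V1] [/= s1 r1 w1 e1 x1]] := IH w h.
exists ((u, w) |: H1, u |: V1); split=> /=.
- apply/subsetP=> e; rewrite in_setU1 => /orP[/eqP->//|]; exact: (subsetP s1).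
- apply: (reach_cons (w := w)); first exact: setU11.
  apply: reach_sub r1; exact: subsetUr.
- exact: setU11.
- move=> e; rewrite !in_setU1 => /orP[/eqP->|he]; first by rewrite eqxx.
  by rewrite (e1 _ he) orbT.
- move=> x; rewrite in_setU1 => /orP[/eqP->|/x1[a an /andP[ha hb]]].
    by exists 0 => //; rewrite reach_refl subn0 /=; apply: (reach_cons (w := w)).
  exists a.+1; first by []. 
  by rewrite subSS hb andbT; apply: (reach_cons (w := w)).
Qed.

Lemma opt_attained k (s t : 'I_k -> V) (d : 'I_k -> nat) (E : {set V * V}) :
  feasible s t d E -> exists F : {set V * V}, [/\ F \subset E, feasible s t d F & #|F| = OPT s t d E].
Proof.
move=> fE; rewrite /OPT.
apply: (@big_ind _ (fun x => exists F : {set V * V}, [/\ F \subset E, feasible s t d F & #|F| = x]))...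
- by exists E.
- move=> x y [F1 [a1 b1 c1]] [F2 [a2 b2 c2]].
  case: (leqP x y) => xy; first by exists F1.
  by exists F2.
- move=> F /andP[a b]; by exists F.
Qed.

Lemma inD k (s t : 'I_k -> V) (d : 'I_k -> nat) (J : junction V) i a :
  a <= d i -> reach (jin J) a (s i) (jroot J) ->
  reach (jout J) (d i - a) (jroot J) (t i) -> i \in jD s t d J.
Proof.
move=> ad h1 h2; rewrite inE /jconnects (reach_verts h1) (reach_verts_out h2) /=.
have ad' : a < (d i).+1 by rewrite ltnS.
by apply/existsP; exists (Ordinal ad'); rewrite /= h1 h2.
Qed.

Lemma junction_sub (H E : {set V * V}) (J : junction V) :
  junction_in H J -> H \subset E -> junction_in E J /\ jedges J \subset H.
Proof.
case/and4P=> a b c e hE; split.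
  by apply/and4P; split=> //; apply: subset_trans hE.
by rewrite /jedges; apply/subsetP=> x; rewrite in_setU => /orP[/(subsetP a)|/(subsetP b)].
Qed.

End M.

Unset Implicit Arguments.
Local Open Scope ring_scope.

Theorem lemma4p3 (R : rcfType) (V : finType) (E : {set V * V})
    (k : nat) (s t : 'I_k -> V) (d : 'I_k -> nat)
    (hk : (0 < k)%N)
    (hd : forall i, reach E (d i) (s i) (t i)) :
  exists J : junction V,
    [/\ junction_in E J, jD s t d J != set0 &
        (#|jedges J|%:R / #|jD s t d J|%:R : R)
          <= (OPT s t d E)%:R / Num.sqrt (k%:R)].
Proof.
have fE : feasible s t d E by apply/forallP.
have [F [sFE fF oF]] := opt_attained fE.
have [HW hHW] := fin_all_exists (fun i => walk_sets ((forallP fF) i)).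
pose i0 := Ordinal hk.
pose c v := #|[set i | v \in (HW i).2]|.
case: (@arg_maxnP _ (s i0) predT c isT) => v0 _ hmax.
case: (@arg_minnP _ i0 predT (fun i => #|(HW i).1|) isT) => i1 _ hmin.
have hS : (\sum_i #|(HW i).1| <= #|F| * c v0)%N.
  apply: (@leq_trans (\sum_i \sum_(e in F) ((e.1 \in (HW i).2) : nat))%N).
    apply: leq_sum => i _.
    have [sH _ _ eH _] := hHW i.
    rewrite -sum1_card [X in (X <= _)%N]big_mkcond [X in (_ <= X)%N]big_mkcond /=.
    apply: leq_sum => e _; case: ifP => // eH'.
    by rewrite (subsetP sH _ eH') eH.
  rewrite exchange_big /= -sum_nat_const; apply: leq_sum => e _.
  apply: leq_trans (hmax e.1 isT).
  rewrite /c -sum1_card [X in (_ <= X)%N]big_mkcond /=.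
  by apply: leq_sum => i _; rewrite inE; case: (_ \in _).
have hK : (k * #|(HW i1).1| <= \sum_i #|(HW i).1|)%N.
  have : (\sum_(i < k) #|(HW i1).1| <= \sum_i #|(HW i).1|)%N.
    by apply: leq_sum => i _; apply: hmin.
  by rewrite big_const_ord iter_addn_0 mulnC.
have c1 : (0 < c v0)%N.
  apply: leq_trans (hmax (s i0) isT); apply/card_gt0P; exists i0.
  by rewrite inE; have [_ _ ? _ _] := hHW i0.
pose N := (\max_i d i)%N.
have dN i : (d i <= N)%N by apply: leq_bigmax.
case: (leqP k (c v0 * c v0)) => hkc.
- have [J [rJ jJ inR outR]] := bfs_junction F v0 N.
  have [jE eJ] := junction_sub jJ sFE.
  have sub : [set i | v0 \in (HW i).2] \subset jD s t d J.
    apply/subsetP=> i; rewrite inE => hv.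
    have [_ _ _ _ xi] := hHW i; have [a ad /andP[ha hb]] := xi _ hv.
    apply: (inD ad); rewrite rJ.
      by apply: inR (leq_trans ad (dN i)) ha.
    by apply: outR _ hb; apply: leq_trans (leq_subr a _) (dN i).
  exists J; split => //.
    by rewrite -card_gt0; apply: leq_trans c1 _; exact: subset_leq_card sub.
  apply: (case1 (c := (c v0)%:R)).
  + exact: ler0n.
  + by rewrite ler_nat -oF; apply: subset_leq_card eJ.
  + by rewrite ler1n.
  + by rewrite ler_nat; apply: subset_leq_card sub.
  + by rewrite ltr0n.
  + by rewrite -natrM ler_nat.
- have [J [rJ jJ inR outR]] := bfs_junction (HW i1).1 (s i1) N.
  have [sH rH _ _ _] := hHW i1.
  have [jE eJ] := junction_sub jJ (subset_trans sH sFE).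
  have iD : i1 \in jD s t d J.
    apply: (inD (a := 0%N)) => //; rewrite rJ; first exact: reach_refl.
    by rewrite subn0; apply: outR (dN i1) rH.
  exists J; split => //.
    by apply/set0Pn; exists i1.
  apply: (case2 (c := (c v0)%:R) (h := #|(HW i1).1|%:R) (f := #|F|%:R)).
  + exact: ler0n.
  + by rewrite ler_nat; apply: subset_leq_card eJ.
  + by rewrite ler1n card_gt0; apply/set0Pn; exists i1.
  + exact: ler0n.
  + by rewrite -natrM ltr_nat.
  + by rewrite -!natrM ler_nat (leq_trans hK hS).
  + by rewrite oF.
  + exact: ler0n.
  + exact: ler0n.
Qed.
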